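(* Let $p$ be a prime and $d$ a power of $p$. If $n_0+n_1d=m_0+m_1d$ for integers $0\le n_0<d$ and $n_1,m_0,m_1\ge0$, then $$v_p\!\left(\frac{m_0!\,m_1!}{n_0!\,n_1!}\right)\le (n_1-m_1)\,v_p(d!).$$
   Context: $v_p$ denotes the $p$-adic valuation on $\mathbb{Q}$. *)

(* Defs.v *)
From mathcomp Require Import all_boot all_order all_algebra.
Set Implicit Arguments. Unset Strict Implicit. Unset Printing Implicit Defensive.
Import Order.TTheory GRing.Theory Num.Theory.
Local Open Scope ring_scope.

(* p-adic valuation on Q (v_p(0) = 0 by convention; irrelevant here since
   the argument is a positive rational). For x = a/b in lowest terms,
   v_p(x) = v_p(a) - v_p(b). *)
Definition vp (p : nat) (x : rat) : int :=
  (logn p `|numq x|%N)%:Z - (logn p `|denq x|%N)%:Z.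

(* Main.v *)
Require Import Defs.
From mathcomp Require Import all_boot all_order all_algebra zify.
Import Order.TTheory GRing.Theory Num.Theory.
Local Open Scope ring_scope.

Lemma vp_frac (p A B : nat) : (0 < A)%N -> (0 < B)%N ->
  vp p (A%:R / B%:R) = (logn p A)%:Z - (logn p B)%:Z.
Proof.
move=> A0 B0; rewrite /vp.
set x : rat := A%:R / B%:R.
have hx : x = (numq x)%:~R / (denq x)%:~R by rewrite divq_num_den.
have hd := denq_gt0 x.
have hB : (B%:R : rat) != 0 by rewrite pnatr_eq0 -lt0n.
have e : (numq x) * B%:Z = A%:Z * denq x.
  apply: (@intr_inj rat).
  rewrite !rmorphM /=.
  have hd' : ((denq x)%:~R : rat) != 0 by rewrite intr_eq0 gt_eqF.
  move: hx; rewrite {1}/x => /(congr1 (fun y => y * B%:R * (denq x)%:~R)).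
  rewrite mulfVK // => ->. rewrite mulrAC divfK //.
have e2 : (`|numq x| * B)%N = (A * `|denq x|)%N.
  by move/(congr1 absz): e; rewrite !abszM.
have nx : (0 < `|numq x|)%N.
  rewrite absz_gt0 numq_eq0 /x mulf_neq0 // ?invr_eq0 // pnatr_eq0 -lt0n //.
have dx : (0 < `|denq x|)%N by rewrite absz_gt0 gt_eqF.
move/(congr1 (logn p)): e2; rewrite !lognM // => e3.
apply/eqP; rewrite subr_eq addrAC eq_sym subr_eq -!PoszD; apply/eqP; congr Posz.
by rewrite addnC e3 addnC.
Qed.


Lemma fsum_ext p N M0 M : prime p -> (N < p ^ M0)%N -> (M0 <= M)%N ->
  (\sum_(1 <= i < M.+1) N %/ p ^ i)%N = (\sum_(1 <= i < M0.+1) N %/ p ^ i)%N.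
Proof.
move=> pp hN hM.
rewrite (big_cat_nat _ (n:=M0.+1)) //=.
rewrite [X in (_ + X)%N]big1_seq ?addn0 // => i /andP [_].
rewrite mem_index_iota => /andP [Ni _]; apply/divn_small.
apply: leq_trans hN _; rewrite leq_exp2l ?prime_gt1 //; exact: ltnW.
Qed.

Lemma logn_fact_M p N M : prime p -> (N < p ^ M)%N ->
  logn p N`! = (\sum_(1 <= i < M.+1) N %/ p ^ i)%N.
Proof.
move=> pp hN; rewrite logn_fact //.
rewrite -(@fsum_ext p N M (maxn N M) pp hN) ?leq_maxr //.
rewrite (@fsum_ext p N N (maxn N M)) ?leq_maxl //.
apply: ltn_expl; exact: prime_gt1.
Qed.

Lemma logn_fact_M' p N M : prime p -> (N < p ^ M.+1)%N ->
  logn p N`! = (\sum_(1 <= i < M.+1) N %/ p ^ i)%N.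
Proof.
move=> pp hN; rewrite (@logn_fact_M _ _ _ pp hN) big_nat_recr //=.
by rewrite divn_small ?addn0.
Qed.

Lemma partA p k n0 t : prime p -> (n0 < p ^ k)%N ->
  (logn p (n0 + t * p ^ k)`! <= logn p n0`! + t * logn p (p ^ k)`! + logn p t`!)%N.
Proof.
move=> pp hn.
have p1 := prime_gt1 pp.
have p0 : (0 < p)%N by exact: prime_gt0.
have ht : (t < p ^ t)%N by exact: ltn_expl.
have hm : (n0 + t * p ^ k < p ^ (k + t).+1)%N.
  rewrite -(addnS k t) expnD; apply: (@leq_trans (p ^ k * t.+1)).
    rewrite mulnS mulnC -addSn leq_add2r //.
  by rewrite leq_mul2l (ltnW (ltn_expl _ p1)) orbT.
have hk1 : forall N, (N <= p ^ k)%N -> (N < p ^ k.+1)%N.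
  move=> N HN; apply: leq_ltn_trans HN _; rewrite ltn_exp2l //.
rewrite (@logn_fact_M' _ _ _ pp hm) (@logn_fact_M' _ _ _ pp (hk1 _ (ltnW hn)))
  (@logn_fact_M' _ _ _ pp (hk1 _ (leqnn _))) (@logn_fact_M' _ _ _ pp (ltn_trans (ltnSn t) (ltn_expl _ p1))).
rewrite (big_cat_nat _ (n:=k.+1)) //=; last by rewrite ltnS leq_addr.
rewrite [X in (_ + X <= _)%N](_ : _ = \sum_(1 <= i < t.+1) t %/ p ^ i)%N; last first.
  rewrite -{1}(add1n k) big_addn.
  have -> : ((k + t).+1 - k = t.+1)%N by rewrite -addnS addKn.
  apply: eq_bigr => i _.
  rewrite [(i + k)%N]addnC expnD divnMA divnDMl ?expn_gt0 ?p0 // (divn_small hn) //.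
rewrite leq_add2r big_distrr /= -big_split /=.
rewrite big_nat_cond [X in (_ <= X)%N]big_nat_cond.
apply: leq_sum => i /andP [/andP [i1 ik] _].
rewrite ltnS in ik.
have -> : (p ^ k = p ^ (k - i) * p ^ i)%N by rewrite -expnD subnK.
rewrite mulnA divnDMl ?expn_gt0 ?p0 // mulnK ?expn_gt0 ?p0 //.
Qed.

Lemma partB p t m : prime p -> (logn p t`! + logn p m`! <= logn p (t + m)`!)%N.
Proof.
move=> pp.
have := bin_fact (leq_addr m t); rewrite addKn => <-.
rewrite lognM ?muln_gt0 ?fact_gt0 ?bin_gt0 ?leq_addr // lognM ?fact_gt0 //.
exact: leq_addl.
Qed.

Theorem lemma2p3 (p k d n0 n1 m0 m1 : nat) :
  prime p -> d = (p ^ k)%N ->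
  (n0 < d)%N ->
  (n0 + n1 * d)%N = (m0 + m1 * d)%N ->
  vp p ((m0`!)%:R * (m1`!)%:R / ((n0`!)%:R * (n1`!)%:R) : rat)
    <= (n1%:Z - m1%:Z) * (logn p d`!)%:Z.
Proof.
move=> pp hd hn e.
have m1n1 : (m1 <= n1)%N by nia.
set t := (n1 - m1)%N.
have hm0 : m0 = (n0 + t * d)%N by rewrite /t mulnBl; nia.
have hn1 : n1 = (t + m1)%N by rewrite /t subnK.
rewrite -!natrM vp_frac ?muln_gt0 ?fact_gt0 // !lognM ?fact_gt0 //.
rewrite (subzn m1n1).
have hn' : (n0 < p ^ k)%N by rewrite -hd.
have hA := @partA p k n0 t pp hn'.
have hB := @partB p t m1 pp.
rewrite -hd -hm0 -hn1 in hA hB.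
lia.
Qed.
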